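(* Fix $q\ge2$. Let $f$ be a real function on the positive integers such that $k(n):=\log_q n-f(n)$ is a positive integer for all sufficiently large $n$, and such that $n-2k(n)=\Theta(n)$. Then $\mathrm{red}(A_q(n,k(n)))=\Theta(q^{f(n)})$, i.e. there are constants $C_1,C_2>0$ with $C_1q^{f(n)}\le \mathrm{red}(A_q(n,k(n)))\le C_2 q^{f(n)}$ for all sufficiently large $n$.
   Context: $\Sigma_q=\{0,\dots,q-1\}$. A vector in $\Sigma_q^n$ is a $k$-RLL vector if $n<k$ or it contains no run of $k$ consecutive zeros. $A_q(n,k)$ is the set of $k$-RLL vectors of length $n$ over $\Sigma_q$. For $A\subseteq\Sigma_q^n$, its redundancy is $\mathrm{red}(A)=n-\log_q|A|$. The function $f$ may take negative values. *)

(* Defs.v *)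
From mathcomp Require Import all_boot.
From Stdlib Require Import Reals.

Set Implicit Arguments. Unset Strict Implicit. Unset Printing Implicit Defensive.

Definition is_rll (q n k : nat) (w : {ffun 'I_n -> 'I_q}) : bool :=
  (n < k) ||
  [forall i : 'I_n, (i + k <= n) ==>
      [exists j : 'I_n, (i <= j) && (j < i + k) && (nat_of_ord (w j) != 0)]].

Definition A_set (q n k : nat) : {set {ffun 'I_n -> 'I_q}} :=
  [set w | is_rll k w].

Definition logq (q : nat) (x : R) : R := (ln x / ln (INR q))%R.

Definition red (q n : nat) (A : {set {ffun 'I_n -> 'I_q}}) : R :=
  (INR n - logq q (INR #|A|))%R.

(* Main.v *)
Require Import Defs.
From Stdlib Require Import Lra Lia.
From mathcomp Require Import all_boot zify.
From Stdlib Require Import Reals.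

Fixpoint wins (k : nat) (s : seq nat) : bool :=
  match s with
  | [::] => true
  | y :: s' => ((k <= size s)%nat ==> has (fun x => x != 0%nat) (take k s)) && wins k s'
  end.

Lemma winsP k s : (0 < k)%nat -> reflect (forall i, (i + k <= size s)%nat -> has (fun x => x != 0%nat) (take k (drop i s))) (wins k s).
Proof.
move=> hk; elim: s => [|y s IH] /=.
  by apply: ReflectT => i /= hi; exfalso; lia.
apply: (iffP andP).
  case=> h1 /IH h2 [|i] /= hi; first by rewrite (implyP h1) //; lia.
  by apply: h2; move: hi; rewrite /=; lia.
move=> h; split.
  by apply/implyP => hk'; have := h 0%nat; apply; rewrite /=; lia.
by apply/IH => i hi; have := h i.+1 => /=; apply; move: hi; rewrite /=; lia.
Qed.

Lemma has_take_nseq_cons k m x t : x != 0%nat ->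
  has (fun x => x != 0%nat) (take k (nseq m 0%nat ++ x :: t)) = (m < k)%nat.
Proof.
move=> hx; elim: m k => [|m IH] [|k] //=; first by rewrite hx.
Qed.

Lemma has_take_nseq k m : has (fun x => x != 0%nat) (take k (nseq m 0%nat)) = false.
Proof. by elim: m k => [|m IH] [|k] //=. Qed.

Lemma wins_nseq_cons k r x t : (0 < k)%nat -> x != 0%nat ->
  wins k (nseq r 0%nat ++ x :: t) = (r < k)%nat && wins k t.
Proof.
move=> hk hx; elim: r => [|r IH].
  by rewrite /= (has_take_nseq_cons _ 0 _ _ hx) /= hk implybT.
rewrite [nseq _ _ ++ _]/= [wins _ (_ :: _)]/= -[0%nat :: _]/(nseq r.+1 0%nat ++ x :: t).
rewrite has_take_nseq_cons // IH.
case: (ltnP r.+1 k) => h /=.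
  by rewrite implybT /= (ltnW h).
rewrite size_cat size_nseq /=.
have -> : (k <= r.+1 + (size t).+1)%nat by lia.
by [].
Qed.

Lemma wins_nseq k r : (0 < k)%nat -> wins k (nseq r 0%nat) = (r < k)%nat.
Proof.
move=> hk; elim: r => [|r IH] //.
rewrite [wins _ _]/= -[0%nat :: _]/(nseq r.+1 0%nat) has_take_nseq IH size_nseq. 
by case: (leqP k r.+1) => h //=; lia.
Qed.

Lemma nseq_cat_cons r (s : seq nat) : nseq r 0%nat ++ 0%nat :: s = nseq r.+1 0%nat ++ s.
Proof. by elim: r => //= r ->. Qed.

Lemma card_pair (T U : finType) (Q : T -> U -> bool) :
  #|[set p : T * U | Q p.1 p.2]| = (\sum_(x : T) #|[set u | Q x u]|)%nat.
Proof.
rewrite -sum1dep_card (eq_bigl (fun p : T * U => xpredT p.1 && Q p.1 p.2)) //.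
rewrite -(pair_big_dep xpredT Q (fun _ _ => 1%nat)) /=.
by apply: eq_bigr => x _; exact: sum1dep_card.
Qed.

Lemma card_tuple_cons (T : finType) n (P : seq T -> bool) :
  #|[set t : (n.+1).-tuple T | P t]| = (\sum_(x : T) #|[set t : n.-tuple T | P (x :: t)]|)%nat.
Proof.
rewrite -(@card_pair _ _ (fun x (t : n.-tuple T) => P (x :: t))).
pose f := fun p : T * n.-tuple T => [tuple of p.1 :: p.2].
have finj : injective f.
  by move=> [x t] [y u] /(congr1 val) /= [-> /val_inj ->].
rewrite -(card_imset _ finj); apply: eq_card => t.
rewrite inE; apply/idP/imsetP.
  move=> Pt; exists (thead t, [tuple of behead t]); first by rewrite inE /=; move: Pt; rewrite {1}(tuple_eta t).
  by rewrite /f /= {1}(tuple_eta t); apply: val_inj.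
by move=> [[x u]]; rewrite inE /= => Pu ->.
Qed.

Definition G q k n r := #|[set t : n.-tuple 'I_q | wins k (nseq r 0%nat ++ map (@nat_of_ord q) t)]|.

Lemma card_bool_and (T : finType) (b : bool) (Q : pred T) :
  #|[set t | b && Q t]| = (b * #|[set t | Q t]|)%nat.
Proof.
case: b => /=; first by rewrite mul1n.
by rewrite mul0n; apply: eq_card0 => t; rewrite inE.
Qed.

Lemma G0 q k r : (0 < k)%nat -> G q k 0 r = (r < k)%nat.
Proof.
move=> hk; rewrite /G.
have -> : [set t : 0.-tuple 'I_q | wins k (nseq r 0%nat ++ map (@nat_of_ord q) t)]
        = [set t : 0.-tuple 'I_q | (r < k)%nat].
  apply/setP => t; rewrite !inE tuple0 /= cats0 wins_nseq //.
case: (r < k)%nat.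
  by rewrite cardsT card_tuple expn0.
by apply: eq_card0 => t; rewrite inE.
Qed.

Lemma sum_if0 q (A B : nat) : (0 < q)%nat ->
  (\sum_(x : 'I_q) (if nat_of_ord x == 0%nat then A else B))%nat = (A + (q - 1) * B)%nat.
Proof.
case: q => [|q] // _; rewrite big_ord_recl /=.
rewrite (eq_bigr (fun _ => B)) // big_const_ord iter_addn_0.
by rewrite subn1 /= mulnC.
Qed.

Lemma GS q k n r : (0 < q)%nat -> (0 < k)%nat ->
  G q k n.+1 r = (G q k n r.+1 + (q - 1) * ((r < k)%nat * G q k n 0))%nat.
Proof.
move=> hq hk; rewrite /G (@card_tuple_cons _ n (fun s => wins k (nseq r 0%nat ++ map (@nat_of_ord q) s))).
rewrite -sum_if0 //; apply: eq_bigr => x _ /=.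
case: eqP => hx.
  by apply: eq_card => t; rewrite !inE hx nseq_cat_cons.
rewrite -card_bool_and; apply: eq_card => t; rewrite !inE wins_nseq_cons //.
by apply/eqP.
Qed.

Lemma nth_tof q n (w : {ffun 'I_n -> 'I_q}) m (hm : (m < n)%nat) :
  nth 0%nat (map (@nat_of_ord q) (tuple_of_finfun w)) m = nat_of_ord (w (Ordinal hm)).
Proof.
rewrite /= -map_comp (nth_map (Ordinal hm)) ?size_enum_ord //=.
by congr (nat_of_ord (w _)); apply: val_inj; rewrite /= nth_enum_ord.
Qed.

Lemma size_tof q n (w : {ffun 'I_n -> 'I_q}) :
  size (map (@nat_of_ord q) (tuple_of_finfun w)) = n.
Proof. by rewrite size_map size_tuple. Qed.

Lemma is_rll_wins q n k (w : {ffun 'I_n -> 'I_q}) : (0 < k)%nat ->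
  is_rll k w = wins k (map (@nat_of_ord q) (tuple_of_finfun w)).
Proof.
move=> hk; set s := map _ _.
have hs : size s = n by apply: size_tof.
apply/idP/idP.
  case/orP => [hnk|H]; apply/winsP => // i hi.
    by exfalso; move: hi; rewrite hs; lia.
  have hin : (i < n)%nat by move: hi; rewrite hs; lia.
  have := forallP H (Ordinal hin) => /implyP /=.
  have hi' : (i + k <= n)%nat by rewrite -hs.
  move=> /(_ hi') /existsP [j /andP[/andP[h1 h2] h3]].
  apply/(has_nthP 0%nat); exists (j - i)%nat.
    by rewrite size_take_min size_drop hs; have := ltn_ord j; lia.
  rewrite nth_take; last by lia.
  rewrite nth_drop.
  have -> : (i + (j - i))%nat = j by lia.
  rewrite /s (@nth_tof _ _ w _ (ltn_ord j)).
  by have -> : Ordinal (ltn_ord j) = j by apply: val_inj.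
move/(winsP _ _ hk) => H.
rewrite /is_rll; case: (ltnP n k) => //= hnk.
apply/forallP => i; apply/implyP => hi.
have := H i; rewrite hs => /(_ hi) /(has_nthP 0%nat) [m hm hnz].
rewrite size_take_min size_drop hs in hm.
have hm' : (i + m < n)%nat by lia.
apply/existsP; exists (Ordinal hm'); rewrite /=.
apply/andP; split; first by apply/andP; split; lia.
by rewrite nth_take ?nth_drop ?/s ?(@nth_tof _ _ w _ hm') in hnz; lia.
Qed.

Lemma card_A q n k : (0 < k)%nat -> #|A_set q n k| = G q k n 0.
Proof.
move=> hk; rewrite /A_set /G.
have inj : injective (@tuple_of_finfun 'I_q n) by apply: can_inj (@tuple_of_finfunK _ _).
rewrite -(card_imset _ inj); apply: eq_card => t.
rewrite inE /=; apply/imsetP/idP.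
  by move=> [w]; rewrite inE is_rll_wins // => hw ->.
move=> ht; exists (finfun_of_tuple t); last by rewrite finfun_of_tupleK.
by rewrite inE is_rll_wins // finfun_of_tupleK.
Qed.

Lemma G_zero q k n r : (0 < q)%nat -> (0 < k)%nat -> (k <= r)%nat -> G q k n r = 0%nat.
Proof.
move=> hq hk; elim: n r => [|n IH] r hr.
  by rewrite G0 //; apply/eqP; rewrite eqb0 -leqNgt.
rewrite GS // IH; last by lia.
have -> : (r < k)%nat = false by lia.
by rewrite mul0n muln0.
Qed.

Lemma G_small q k n r : (0 < q)%nat -> (0 < k)%nat -> (n + r < k)%nat -> G q k n r = expn q n.
Proof.
move=> hq hk; elim: n r => [|n IH] r hr.
  by rewrite G0 //; move: hr; rewrite add0n => ->.
rewrite GS // IH; last by lia.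
rewrite IH; last by lia.
have -> : (r < k)%nat = true by lia.
rewrite mul1n expnS; case: q hq {IH} => // q _; rewrite subn1 /=.
by rewrite mulSn.
Qed.

Lemma G_pos q k n r : (1 < q)%nat -> (0 < k)%nat -> (r < k)%nat -> (1 <= G q k n r)%nat.
Proof.
move=> hq hk; elim: n r => [|n IH] r hr.
  by rewrite G0 // hr.
rewrite GS //; last by lia.
rewrite hr mul1n.
have := IH 0%nat hk; nia.
Qed.

Local Open Scope R_scope.

Lemma INR_addn a b : INR (a + b)%nat = INR a + INR b.
Proof. exact: plus_INR. Qed.
Lemma INR_muln a b : INR (a * b)%nat = INR a * INR b.
Proof. exact: mult_INR. Qed.
Lemma INR_expn a b : INR (expn a b) = INR a ^ b.
Proof.
elim: b => [|b IH]; first by rewrite expn0.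
by rewrite expnS INR_muln IH.
Qed.

Fixpoint wf (p : nat) (L : R) (m : nat) : R :=
  match m with O => 0 | S m => (INR p + wf p L m) / L end.

Lemma wf_ge0 p L m : 0 < L -> 0 <= wf p L m.
Proof.
move=> hL; elim: m => [|m IH] /=; first lra.
apply: Rmult_le_pos; last by apply/Rlt_le/Rinv_0_lt_compat.
have := pos_INR p; lra.
Qed.

Lemma upperG p k (L C : R) : (0 < k)%nat -> 1 < L -> 0 <= C ->
  (forall n, (n < k)%nat -> INR p.+1 ^ n <= C * L ^ n) -> wf p L k <= 1 ->
  forall n r, (r < k)%nat -> (k <= n + r)%nat ->
  INR (G p.+1 k n r) <= C * L ^ n * wf p L (k - r).
Proof.
move=> hk hL hC hsmall hw; elim=> [|n IH] r hr hkn.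
  by exfalso; move: hkn hr; rewrite add0n; lia.
have hLn : 0 <= C * L ^ n by apply: Rmult_le_pos => //; apply/Rlt_le/pow_lt; lra.
rewrite GS // hr mul1n subn1 /= INR_addn INR_muln.
have h1 : INR (G p.+1 k n r.+1) <= C * L ^ n * wf p L (k - r.+1).
  case: (ltnP r.+1 k) => h; first by apply: IH => //; lia.
  rewrite G_zero // (_ : (k - r.+1)%nat = 0%nat) /=; last by lia.
  lra.
have h2 : INR (G p.+1 k n 0) <= C * L ^ n.
  case: (ltnP n k) => h.
    rewrite G_small ?INR_expn //; first exact: hsmall.
    by rewrite addn0.
  have := IH 0%nat hk; rewrite addn0 subn0 => /(_ h) h3.
  have := Rmult_le_compat_l _ _ _ hLn hw; lra.
have -> : (k - r = (k - r.+1).+1)%nat by lia.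
rewrite [wf p L _.+1]/=.
have -> : C * (L * L ^ n) * ((INR p + wf p L (k - r.+1)) / L)
        = INR p * (C * L ^ n) + C * L ^ n * wf p L (k - r.+1) by field; lra.
have := Rmult_le_compat_l _ _ _ (pos_INR p) h2; lra.
Qed.

Lemma lowerG p k (M : R) : (0 < k)%nat -> 1 < M -> M <= INR p.+1 -> 1 <= wf p M k ->
  forall n r, (r < k)%nat -> (k <= n + r)%nat ->
  M ^ n * wf p M (k - r) <= INR (G p.+1 k n r).
Proof.
move=> hk hM hMq hw; elim=> [|n IH] r hr hkn.
  by exfalso; move: hkn hr; rewrite add0n; lia.
have hMn : 0 <= M ^ n by apply/Rlt_le/pow_lt; lra.
rewrite GS // hr mul1n subn1 /= INR_addn INR_muln.
have h1 : M ^ n * wf p M (k - r.+1) <= INR (G p.+1 k n r.+1).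
  case: (ltnP r.+1 k) => h; first by apply: IH => //; lia.
  rewrite (_ : (k - r.+1)%nat = 0%nat) /=; last by lia.
  have := pos_INR (G p.+1 k n r.+1); lra.
have h2 : M ^ n <= INR (G p.+1 k n 0).
  case: (ltnP n k) => h.
    rewrite G_small ?INR_expn //; last by rewrite addn0.
    by apply: pow_incr; lra.
  have := IH 0%nat hk; rewrite addn0 subn0 => /(_ h) h3.
  have := Rmult_le_compat_l _ _ _ hMn hw; lra.
have -> : (k - r = (k - r.+1).+1)%nat by lia.
rewrite [wf p M _.+1]/=.
have -> : M * M ^ n * ((INR p + wf p M (k - r.+1)) / M)
        = INR p * M ^ n + M ^ n * wf p M (k - r.+1) by field; lra.
have := Rmult_le_compat_l _ _ _ (pos_INR p) h2; lra.
Qed.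

Lemma wf_closed p L m : 1 < L -> wf p L m = INR p * (1 - / L ^ m) / (L - 1).
Proof.
move=> hL; elim: m => [|m IH] /=.
  field; lra.
rewrite IH; have : 0 < L ^ m by apply: pow_lt; lra.
move=> hm; field; lra.
Qed.

Lemma wf_le1 p k L : 1 < L -> L ^ k * (INR p.+1 - L) <= INR p -> wf p L k <= 1.
Proof.
move=> hL h; rewrite wf_closed //.
have hY : 0 < L ^ k by apply: pow_lt; lra.
rewrite S_INR in h.
have hpos : 0 < L ^ k * (L - 1) by apply: Rmult_lt_0_compat; lra.
apply: (Rmult_le_reg_r _ _ _ hpos).
rewrite (_ : INR p * (1 - / L ^ k) / (L - 1) * (L ^ k * (L - 1)) = INR p * L ^ k - INR p); last by field; lra.
nra.
Qed.

Lemma wf_ge1 p k M : 1 < M -> INR p <= M ^ k * (INR p.+1 - M) -> 1 <= wf p M k.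
Proof.
move=> hL h; rewrite wf_closed //.
have hY : 0 < M ^ k by apply: pow_lt; lra.
rewrite S_INR in h.
have hpos : 0 < M ^ k * (M - 1) by apply: Rmult_lt_0_compat; lra.
apply: (Rmult_le_reg_r _ _ _ hpos).
rewrite (_ : INR p * (1 - / M ^ k) / (M - 1) * (M ^ k * (M - 1)) = INR p * M ^ k - INR p); last by field; lra.
nra.
Qed.

Lemma pow_addn x a b : x ^ (a + b)%nat = x ^ a * x ^ b.
Proof. exact: pow_add. Qed.

Lemma pow_le1 x m : 0 <= x <= 1 -> x ^ m <= 1.
Proof.
move=> hx; elim: m => [|m IH] /=; first lra.
have := pow_le x m (proj1 hx); nra.
Qed.

Lemma bernoulli x m : 0 <= x <= 1 -> 1 - INR m * x <= (1 - x) ^ m.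
Proof.
move=> hx; elim: m => [|m IH]; first by rewrite /=; lra.
rewrite S_INR /=.
have := pos_INR m; nra.
Qed.

Lemma pow_ge_4k Q j : 2 <= Q -> 4 * INR (j + 4) <= Q ^ (j + 4).
Proof.
move=> hQ; elim: j => [|j IH].
  rewrite add0n; replace (INR 4) with 4 by (simpl; ring).
  have h2 : 4 <= Q * Q by nra.
  have -> : Q ^ 4 = (Q * Q) * (Q * Q) by simpl; ring.
  nra.
rewrite addSn S_INR [Q ^ _]/=.
have h1 : INR 1 <= INR (j + 4) by apply: le_INR; apply/leP; lia.
rewrite /= in h1; nra.
Qed.

Lemma Qk_ge Q k : 2 <= Q -> (1 <= k)%nat -> Q <= Q ^ k.
Proof.
move=> hQ hk; have := Rle_pow Q 1 k; rewrite pow_1; apply; first lra.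
by apply/leP.
Qed.

Lemma A_upper p k n : (1 <= p)%nat -> (0 < k)%nat -> (k <= n)%nat ->
  INR (G p.+1 k n 0) <= INR p.+1 ^ n * (1 - / (2 * INR p.+1 ^ k)) ^ (n - k).
Proof.
move=> hp hk hkn.
set Q := INR p.+1; set d := / (2 * Q ^ k).
have hP : 1 <= INR p by apply: (le_INR 1); apply/leP.
have hQ : 2 <= Q by rewrite /Q S_INR; lra.
have hQk : Q <= Q ^ k by apply: Qk_ge.
have hd : 0 < d by apply: Rinv_0_lt_compat; lra.
have hdQ : d * Q ^ k = / 2 by rewrite /d; field; lra.
have hd4 : d <= / 4.
  rewrite /d; apply: Rinv_le_contravar; lra.
set L := Q * (1 - d).
have hL : 1 < L by rewrite /L; nra.
have hLQ : L <= Q by rewrite /L; nra.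
have hL0 : 0 < L by lra.
set C := Q ^ k / L ^ k.
have hLk : 0 < L ^ k by apply: pow_lt.
have hC : 0 <= C by apply/Rlt_le/Rdiv_lt_0_compat => //; apply: pow_lt; lra.
have hsmall : forall m, (m < k)%nat -> Q ^ m <= C * L ^ m.
  move=> m hm.
  have hQL : 1 <= Q / L.
    apply: (Rmult_le_reg_r L) => //; rewrite Rmult_1_l; field_simplify; lra.
  have h1 := Rle_pow (Q / L) m k hQL (ltac:(apply/leP; lia)).
  have hLm : 0 <= L ^ m by apply: pow_le; lra.
  have := Rmult_le_compat_r _ _ _ hLm h1.
  rewrite -Rpow_mult_distr (_ : Q / L * L = Q); last by field; lra.
  rewrite /C (_ : Q ^ k / L ^ k = (Q / L) ^ k) //.
  by rewrite /Rdiv Rpow_mult_distr pow_inv.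
have hw : wf p L k <= 1.
  apply: wf_le1 => //.
  rewrite -/Q /L Rpow_mult_distr.
  have hdk : (1 - d) ^ k <= 1 by apply: pow_le1; lra.
  have hdk0 : 0 <= (1 - d) ^ k by apply: pow_le; lra.
  have -> : Q ^ k * (1 - d) ^ k * (Q - Q * (1 - d)) = (1 - d) ^ k * Q * (d * Q ^ k) by ring.
  rewrite hdQ.
  have : INR p = Q - 1 by rewrite /Q S_INR; ring.
  nra.
have := @upperG p k L C hk hL hC hsmall hw n 0%nat hk.
rewrite addn0 subn0 => /(_ hkn) h.
have hCL : 0 <= C * L ^ n by apply: Rmult_le_pos => //; apply: pow_le; lra.
have h2 : INR (G p.+1 k n 0) <= C * L ^ n.
  have := Rmult_le_compat_l _ _ _ hCL hw; lra.
apply: (Rle_trans _ _ _ h2).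
have hn : (n = (n - k) + k)%nat by lia.
rewrite /C {1}hn pow_addn /L Rpow_mult_distr.
rewrite Rpow_mult_distr (_ : Q ^ n = Q ^ (n - k) * Q ^ k); last by rewrite -pow_addn -hn.
have h3 : 0 < Q ^ k by apply: pow_lt; lra.
have h4 : 0 < (1 - d) ^ k by apply: pow_lt; lra.
right; field.
split; first lra.
apply: pow_nonzero; lra.
Qed.

Lemma A_lower p k n : (1 <= p)%nat -> (4 <= k)%nat ->
  (INR p.+1 * (1 - 2 / INR p.+1 ^ k)) ^ n <= INR (G p.+1 k n 0).
Proof.
move=> hp hk4.
have hk : (0 < k)%nat by lia.
set Q := INR p.+1; set e := 2 / Q ^ k.
have hP : 1 <= INR p by apply: (le_INR 1); apply/leP.
have hQ : 2 <= Q by rewrite /Q S_INR; lra.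
have h4k : 4 * INR k <= Q ^ k.
  have -> : k = ((k - 4) + 4)%nat by lia.
  exact: pow_ge_4k.
have hk4R : 4 <= INR k.
  have H := le_INR 4 k (ltac:(apply/leP; lia)).
  by replace (INR 4) with 4 in H by (simpl; ring).
have hQk : 0 < Q ^ k by lra.
have he : 0 < e by apply: Rdiv_lt_0_compat; lra.
have heQ : e * Q ^ k = 2 by rewrite /e; field; lra.
have hke : INR k * e <= / 2.
  rewrite /e; apply: (Rmult_le_reg_r (Q ^ k)) => //.
  rewrite (_ : INR k * (2 / Q ^ k) * Q ^ k = 2 * INR k); last by field; lra.
  lra.
have he8 : e <= / 8.
  have : e <= / 2 / INR k by apply: (Rmult_le_reg_l (INR k)); [lra | field_simplify; lra].
  move=> h; apply: (Rle_trans _ _ _ h).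
  apply: (Rmult_le_reg_r (INR k)); first lra.
  field_simplify; lra.
set M := Q * (1 - e).
have hM : 1 < M by rewrite /M; nra.
have hMQ : M <= Q by rewrite /M; nra.
have hw : 1 <= wf p M k.
  apply: wf_ge1 => //.
  rewrite -/Q /M Rpow_mult_distr.
  have hb := @bernoulli e k (ltac:(lra) : 0 <= e <= 1).
  have -> : Q ^ k * (1 - e) ^ k * (Q - Q * (1 - e)) = (1 - e) ^ k * Q * (e * Q ^ k) by ring.
  rewrite heQ.
  have : INR p = Q - 1 by rewrite /Q S_INR; ring.
  nra.
case: (ltnP n k) => hnk.
  rewrite G_small ?INR_expn //; last by rewrite addn0.
  by rewrite -/Q; apply: pow_incr; lra.
have := @lowerG p k M hk hM hMQ hw n 0%nat hk.
rewrite addn0 subn0 => /(_ hnk) h.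
have hMn : 0 <= M ^ n by apply: pow_le; lra.
have := Rmult_le_compat_l _ _ _ hMn hw; lra.
Qed.

Lemma ln_le' x y : 0 < x -> x <= y -> ln x <= ln y.
Proof.
move=> hx [h|->]; last lra.
by apply/Rlt_le/ln_increasing.
Qed.

Lemma ln_1m_le d : 0 <= d < 1 -> ln (1 - d) <= - d.
Proof.
move=> hd; rewrite -(ln_exp (- d)); apply: ln_le'; first lra.
have := exp_ineq1_le (- d); lra.
Qed.

Lemma ln_1m_ge e : 0 <= e <= / 2 -> - (2 * e) <= ln (1 - e).
Proof.
move=> he; rewrite -{1}(ln_exp (- (2 * e))); apply: ln_le'; first exact: exp_pos.
rewrite exp_Ropp.
have h1 := exp_ineq1_le (2 * e).
have h2 : 0 < 1 + 2 * e by lra.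
apply: (Rle_trans _ (/ (1 + 2 * e))).
  by apply: Rinv_le_contravar.
apply: (Rmult_le_reg_r (1 + 2 * e)) => //.
rewrite Rinv_l; last lra.
nra.
Qed.

Lemma Rpower_f Q (n K : nat) fn : 1 < Q -> (0 < n)%nat ->
  INR K = ln (INR n) / ln Q - fn -> Rpower Q fn = INR n / Q ^ K.
Proof.
move=> hQ hn hK.
have hlnQ : 0 < ln Q by rewrite -ln_1; apply: ln_increasing; lra.
have hn' : 0 < INR n by apply: lt_0_INR; apply/ltP.
have -> : fn = ln (INR n) / ln Q - INR K by lra.
rewrite /Rpower.
have -> : (ln (INR n) / ln Q - INR K) * ln Q = ln (INR n) + - (INR K * ln Q) by field; lra.
rewrite exp_plus exp_ln // exp_Ropp.
have -> : exp (INR K * ln Q) = Q ^ K.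
  by rewrite -(Rpower_pow K Q); [|lra].
by [].
Qed.

Theorem corollary1 (q : nat) (hq : (2 <= q)%nat) (f : nat -> R) (k : nat -> nat)
  (hk : exists N : nat, forall n : nat, (N <= n)%nat ->
          (0 < k n)%nat /\ INR (k n) = (logq q (INR n) - f n)%R)
  (htheta : exists c1 c2 : R, (0 < c1)%R /\ (0 < c2)%R /\
          exists N : nat, forall n : nat, (N <= n)%nat ->
            (c1 * INR n <= INR n - 2 * INR (k n) <= c2 * INR n)%R) :
  exists C1 C2 : R, (0 < C1)%R /\ (0 < C2)%R /\
    exists N : nat, forall n : nat, (N <= n)%nat ->
      (C1 * Rpower (INR q) (f n) <= red (A_set q n (k n))
        <= C2 * Rpower (INR q) (f n))%R.
Proof.
case: hk => N1 hN1.
case: htheta => c1 [c2 [hc1 [hc2 [N2 hN2]]]].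
case: q hq hN1 => [|p] // hq hN1.
have hp : (1 <= p)%nat by lia.
set Q := INR p.+1.
have hP : 1 <= INR p by apply: (le_INR 1); apply/leP.
have hQ : 2 <= Q by rewrite /Q S_INR; lra.
have hlnQ : 0 < ln Q by rewrite -ln_1; apply: ln_increasing; lra.
have hQ3 : 0 < Q ^ 3 by apply: pow_lt; lra.
exists (/ (4 * ln Q)), (Q ^ 3 + 4 / ln Q).
split; first by apply: Rinv_0_lt_compat; lra.
split; first have : 0 < 4 / ln Q by apply: Rdiv_lt_0_compat; lra.
  lra.
exists (maxn (maxn N1 N2) 1) => n hn.
have [hK0 hK] := hN1 n (ltac:(lia)).
have [ht1 _] := hN2 n (ltac:(lia)).
move: hK0 hK ht1; set K := k n => hK0 hK ht1.
have hn0 : (0 < n)%nat by lia.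
have hnR : 0 < INR n by apply: lt_0_INR; apply/ltP.
have hKR : 2 * INR K <= INR n by nra.
have hKn : (K <= n)%nat.
  by apply/leP; apply: INR_le; have := pos_INR K; lra.
rewrite /logq -/Q in hK.
rewrite (@Rpower_f Q n K (f n)) //; last lra.
rewrite /red card_A // /logq -/Q.
set a := INR (G p.+1 K n 0).
have ha1 : 1 <= a.
  by rewrite /a; apply: (le_INR 1); apply/leP; apply: G_pos.
have hQK : 0 < Q ^ K by apply: pow_lt; lra.
have hlna : 0 <= ln a by rewrite -ln_1; apply: ln_le'; lra.
split.
- set d := / (2 * Q ^ K).
  have hd : 0 < d by apply: Rinv_0_lt_compat; lra.
  have hQKQ : Q <= Q ^ K by apply: Qk_ge.
  have hd1 : d < 1.
    rewrite /d; apply: (Rmult_lt_reg_r (2 * Q ^ K)); first lra.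
    rewrite Rinv_l; lra.
  have hu : a <= Q ^ n * (1 - d) ^ (n - K) by apply: A_upper.
  have hnK : INR (n - K)%nat = INR n - INR K by apply: minus_INR; apply/leP.
  have key : ln a <= INR n * ln Q - (INR n - INR K) * d.
    have hla := @ln_le' a _ (ltac:(lra)) hu.
    apply: (Rle_trans _ _ _ hla).
    rewrite ln_mult; [|apply: pow_lt; lra|apply: pow_lt; lra].
    rewrite !ln_pow; [|lra|lra].
    rewrite hnK.
    have := @ln_1m_le d (ltac:(lra) : 0 <= d < 1).
    have : 0 <= INR n - INR K by lra.
    nra.
  have h3 : INR n / (4 * Q ^ K) <= (INR n - INR K) * d.
    rewrite /d (_ : (INR n - INR K) * / (2 * Q ^ K) = (2 * (INR n - INR K)) / (4 * Q ^ K)); last by field; lra.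
    apply: Rmult_le_compat_r; last lra.
    by apply/Rlt_le/Rinv_0_lt_compat; lra.
  have -> : / (4 * ln Q) * (INR n / Q ^ K) = (INR n / (4 * Q ^ K)) * / ln Q by field; lra.
  have -> : INR n - ln a / ln Q = (INR n * ln Q - ln a) * / ln Q by field; lra.
  apply: Rmult_le_compat_r; first by apply/Rlt_le/Rinv_0_lt_compat.
  lra.
- have hX : 0 <= INR n / Q ^ K by apply/Rlt_le/Rdiv_lt_0_compat.
  case: (ltnP K 4) => hK4.
    have hQK3 : Q ^ K <= Q ^ 3 by apply: Rle_pow; [lra | apply/leP; lia].
    have : 0 <= 4 / ln Q * (INR n / Q ^ K).
      by apply: Rmult_le_pos => //; apply/Rlt_le/Rdiv_lt_0_compat; lra.
    have : INR n <= Q ^ 3 * (INR n / Q ^ K).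
      rewrite {1}(_ : INR n = Q ^ K * (INR n / Q ^ K)); last by field; lra.
      by apply: Rmult_le_compat_r.
    have : 0 <= ln a / ln Q by apply: Rmult_le_pos => //; apply/Rlt_le/Rinv_0_lt_compat.
    lra.
  set e := 2 / Q ^ K.
  have h4k : 4 * INR K <= Q ^ K.
    have -> : K = ((K - 4) + 4)%nat by lia.
    exact: pow_ge_4k.
  have hK4R : 4 <= INR K.
    have H := le_INR 4 K (ltac:(apply/leP; lia)).
    by replace (INR 4) with 4 in H by (simpl; ring).
  have he : 0 < e by apply: Rdiv_lt_0_compat; lra.
  have he2 : e <= / 2.
    rewrite /e; apply: (Rmult_le_reg_r (Q ^ K)) => //.
    rewrite (_ : 2 / Q ^ K * Q ^ K = 2); last by field; lra.
    lra.
  have hl : (Q * (1 - e)) ^ n <= a by apply: A_lower; lia.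
  have key : INR n * ln Q - 2 * e * INR n <= ln a.
    have hpos : 0 < (Q * (1 - e)) ^ n by apply: pow_lt; nra.
    have hla := @ln_le' _ a hpos hl.
    apply: (Rle_trans _ _ _ _ hla).
    rewrite ln_pow; last nra.
    rewrite ln_mult; [|lra|lra].
    have := @ln_1m_ge e (ltac:(lra) : 0 <= e <= / 2).
    have := pos_INR n.
    nra.
  have h5 : 0 <= Q ^ 3 * (INR n / Q ^ K) by apply: Rmult_le_pos; lra.
  have -> : INR n - ln a / ln Q = (INR n * ln Q - ln a) * / ln Q by field; lra.
  have -> : (Q ^ 3 + 4 / ln Q) * (INR n / Q ^ K)
          = Q ^ 3 * (INR n / Q ^ K) + (2 * e * INR n) * / ln Q by rewrite /e; field; lra.
  have : (INR n * ln Q - ln a) * / ln Q <= (2 * e * INR n) * / ln Q.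
    apply: Rmult_le_compat_r; first by apply/Rlt_le/Rinv_0_lt_compat.
    lra.
  lra.
Qed.
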